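(* Let $m=2k$ with $k\in\mathbb{N}$. For every $\beta\in(k+1,m+1]$ there exists $x\in(0,\frac{m}{\beta-1})$ with a unique $\beta$-expansion, i.e. $|\Sigma_{\beta,m}(x)|=1$.
   Context: $\Sigma_{\beta,m}(x)=\{(\epsilon_i)_{i=1}^\infty\in\{0,\ldots,m\}^{\mathbb{N}}:\sum_{i\ge1}\epsilon_i\beta^{-i}=x\}$; its elements are the $\beta$-expansions of $x$. *)

(* Defs.v *)
From Stdlib Require Import Reals.
From Coquelicot Require Import Coquelicot.
Open Scope R_scope.

(* A beta-expansion of x with digits in {0,...,m}: eps : nat -> nat, where
   eps i stands for epsilon_{i+1}, and sum_{i>=0} eps i * beta^{-(i+1)} = x. *)
Definition is_beta_expansion (beta : R) (m : nat) (x : R) (eps : nat -> nat) : Prop :=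
  (forall i, (eps i <= m)%nat) /\
  is_series (fun i => INR (eps i) / beta ^ (S i)) x.

Definition Sigma (beta : R) (m : nat) (x : R) : (nat -> nat) -> Prop :=
  fun eps => is_beta_expansion beta m x eps.

Definition unique_expansion (beta : R) (m : nat) (x : R) : Prop :=
  exists eps, Sigma beta m x eps /\
    forall eps', Sigma beta m x eps' -> forall i, eps' i = eps i.

(* Main.v *)
Require Import Defs.
From Stdlib Require Import Reals Lra Lia.
From Coquelicot Require Import Coquelicot.
Open Scope R_scope.

Lemma geom_c (beta c : R) : 1 < beta ->
  is_series (fun i => c / beta ^ (S i)) (c / (beta - 1)).
Proof.
  intros Hb.
  assert (Hq : Rabs (/ beta) < 1).
  { rewrite Rabs_pos_eq. rewrite <- Rinv_1. apply Rinv_lt_contravar; lra. left; apply Rinv_0_lt_compat; lra. }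
  pose proof (is_series_scal (c / beta) _ _ (is_series_geom _ Hq)) as H.
  eapply is_series_ext; [| replace (c / (beta - 1)) with (scal (c/beta) (/ (1 - /beta))); [exact H|]].
  - intros n. unfold scal; simpl; unfold mult; simpl. rewrite pow_inv. simpl. field.
    split; [apply pow_nonzero|]; lra.
  - unfold scal; simpl; unfold mult; simpl. field. lra.
Qed.

Lemma is_series_eq (a : nat -> R) (l l' : R) : is_series a l -> l = l' -> is_series a l'.
Proof. intros H ->; exact H. Qed.

Lemma zero_series : is_series (fun _ : nat => 0) 0.
Proof.
  pose proof (is_series_scal 0 _ _ (is_series_geom 0 ltac:(rewrite Rabs_R0; lra))) as H.
  eapply is_series_ext; [| eapply is_series_eq; [exact H|]].
  2: unfold scal; simpl; unfold mult; simpl; ring.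
  intros n; unfold scal; simpl; unfold mult; simpl; ring.
Qed.

Lemma bounds (beta : R) (m : nat) (e : nat -> nat) (T : R) : 1 < beta ->
  (forall i, (e i <= m)%nat) ->
  is_series (fun i => INR (e i) / beta ^ (S i)) T -> 0 <= T <= INR m / (beta - 1).
Proof.
  intros Hb He HT.
  assert (Hpos : forall i, 0 < beta ^ i) by (intros; apply pow_lt; lra).
  split.
  - rewrite <- (is_series_unique _ _ HT).
    rewrite <- (is_series_unique _ _ zero_series).
    apply Series_le.
    + intros n; split; [lra|]. apply Rmult_le_pos; [apply pos_INR|].
      left; apply Rinv_0_lt_compat, Hpos.
    + eexists; exact HT.
  - rewrite <- (is_series_unique _ _ HT).
    rewrite <- (is_series_unique _ _ (geom_c beta (INR m) Hb)).
    apply Series_le.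
    + intros n; split.
      * apply Rmult_le_pos; [apply pos_INR|]. left; apply Rinv_0_lt_compat, Hpos.
      * unfold Rdiv. apply Rmult_le_compat_r. left; apply Rinv_0_lt_compat, Hpos.
        apply le_INR, He.
    + eexists; exact (geom_c beta (INR m) Hb).
Qed.

Fixpoint yseq (beta x : R) (e : nat -> nat) (n : nat) : R :=
  match n with O => x | S n => beta * yseq beta x e n - INR (e n) end.

Lemma yseq_series (beta x : R) (e : nat -> nat) : 1 < beta ->
  is_series (fun i => INR (e i) / beta ^ (S i)) x ->
  forall n, is_series (fun i => INR (e (n + i)%nat) / beta ^ (S i)) (yseq beta x e n).
Proof.
  intros Hb H0 n. induction n as [|n IH].
  - simpl. exact H0.
  - assert (H1 := is_series_incr_1 (fun i => INR (e (n + i)%nat) / beta ^ (S i))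
                 (yseq beta x e n - INR (e n) / beta)).
    assert (H2 : is_series (fun k0 : nat => INR (e (n + S k0)%nat) / beta ^ S (S k0))
                 (yseq beta x e n - INR (e n) / beta)).
    { apply H1. eapply is_series_eq; [exact IH|].
      rewrite Nat.add_0_r. unfold plus; simpl. field. lra. }
    pose proof (is_series_scal beta _ _ H2) as H3.
    eapply is_series_ext; [| eapply is_series_eq; [exact H3|]].
    + intros i. unfold scal; simpl; unfold mult; simpl.
      replace (n + S i)%nat with (S (n + i))%nat by lia. simpl. field.
      split; [apply pow_nonzero|]; lra.
    + unfold scal; simpl; unfold mult; simpl. field. lra.
Qed.

Theorem proposition3p2 (k : nat) (beta : R) :
  let m := (2 * k)%nat in
  INR k + 1 < beta <= INR m + 1 ->
  exists x : R, 0 < x < INR m / (beta - 1) /\ unique_expansion beta m x.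
Proof.
  intros m [Hb1 Hb2].
  assert (Hk : (0 < k)%nat).
  { destruct k; [|lia]. exfalso. subst m. simpl in *. lra. }
  assert (Hm : INR m = 2 * INR k) by (subst m; rewrite mult_INR; simpl; ring).
  assert (HkR : 0 < INR k) by (apply lt_0_INR; exact Hk).
  assert (Hb : 1 < beta) by lra.
  assert (Hx1 : INR k / (beta - 1) < 1).
  { apply (Rmult_lt_reg_r (beta - 1)); [lra|]. unfold Rdiv. rewrite Rmult_assoc, Rinv_l; lra. }
  exists (INR k / (beta - 1)). split.
  { split. apply Rdiv_lt_0_compat; lra.
    rewrite Hm. unfold Rdiv. apply Rmult_lt_compat_r. apply Rinv_0_lt_compat; lra. lra. }
  exists (fun _ => k). split.
  { split; [intros; subst m; lia|]. apply geom_c; exact Hb. }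
  intros e [He Hs].
  set (x := INR k / (beta - 1)) in *.
  assert (Hxe : beta * x = INR k + x) by (unfold x; field; lra).
  assert (Main : forall n, yseq beta x e n = x /\ e n = k).
  { intros n. induction n as [n IH] using (well_founded_induction Wf_nat.lt_wf).
    assert (Hy : yseq beta x e n = x).
    { destruct n as [|n]; [reflexivity|]. simpl.
      destruct (IH n ltac:(lia)) as [A B]. rewrite A, B. lra. }
    split; [exact Hy|].
    assert (HS := yseq_series beta x e Hb Hs (S n)).
    destruct (bounds beta m (fun i => e (S n + i)%nat) _ Hb (fun i => He _) HS) as [L U].
    simpl in L, U. rewrite Hy in L, U.
    destruct (Compare_dec.lt_eq_lt_dec (e n) k) as [[Hlt|Heq]|Hgt]; [|exact Heq|].
    - exfalso. apply le_INR in Hlt. rewrite S_INR in Hlt.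
      assert (INR m / (beta - 1) = 2 * x) by (unfold x; rewrite Hm; field; lra).
      lra.
    - exfalso. apply le_INR in Hgt. rewrite S_INR in Hgt. lra. }
  intros i. apply Main.
Qed.
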